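(* Let $\mathfrak{R}$ be a complete rewriting system on $\Sigma$ and let $(w,r_1,r_2)$ be a triple, where $\ell_1$ and $\ell_2$ denote the left-hand sides of the rules $r_1$ and $r_2$ respectively. If $\mathrm{pre}(\ell_2)\cap\mathrm{suf}(\ell_1)=\emptyset$ or $\mathrm{pre}(\ell_1)\cap\mathrm{suf}(\ell_2)=\emptyset$, then the triple $(w,r_1,r_2)$ is $\tilde c$-defined.
   Context: $\Sigma^*$ is the free monoid on $\Sigma$; a rewriting system is a set of rules $l\to r$ with $l,r\in\Sigma^*$, complete meaning terminating and confluent; a rule $l\to r$ can be applied to a word if $l$ is a subword (factor) of it. A triple $(w,r_1,r_2)$ consists of a word $w$ and rules $r_1,r_2\in\mathfrak{R}$ such that $r_1$ can be applied to some cyclic conjugate of $w$ and $r_2$ can be applied to some (possibly different) cyclic conjugate of $w$ (cyclic conjugates taken in $\Sigma^*$: $ab$ and $ba$). The triple is $\tilde c$-defined if some single cyclic conjugate of $w$ admits application of both $r_1$ and $r_2$. For a word $w=x_1x_2\cdots x_k$ with letters $x_i\in\Sigma$, $\mathrm{pre}(w)=\{x_1,x_1x_2,\dots,x_1\cdots x_k\}$ (nonempty prefixes) and $\mathrm{suf}(w)=\{x_k,x_{k-1}x_k,\dots,x_1\cdots x_k\}$ (nonempty suffixes). *)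

(* Defs.v *)
From mathcomp Require Import all_boot.
From Stdlib Require Import Relations.
Set Implicit Arguments. Unset Strict Implicit. Unset Printing Implicit Defensive.

Section Rewriting.
Variable Sigma : finType.

(* A rule l -> r, with l the left-hand side (.1) and r the right-hand side (.2). *)
Definition rule := (seq Sigma * seq Sigma)%type.

Definition rewriting_system := rule -> Prop.

Definition rw_step (R : rewriting_system) (u v : seq Sigma) : Prop :=
  exists (x y : seq Sigma) (rl : rule), R rl /\ u = x ++ rl.1 ++ y /\ v = x ++ rl.2 ++ y.

Definition rw_star (R : rewriting_system) := clos_refl_trans (seq Sigma) (rw_step R).

Definition terminating (R : rewriting_system) : Prop :=
  well_founded (fun v u => rw_step R u v).

Definition confluent (R : rewriting_system) : Prop :=
  forall u v1 v2, rw_star R u v1 -> rw_star R u v2 ->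
    exists z, rw_star R v1 z /\ rw_star R v2 z.

Definition complete (R : rewriting_system) : Prop := terminating R /\ confluent R.

Definition applicable (rl : rule) (u : seq Sigma) : bool := infix rl.1 u.

(* cyclic conjugates of w are the rotations rot i w *)
Definition is_triple (R : rewriting_system) (w : seq Sigma) (r1 r2 : rule) : Prop :=
  R r1 /\ R r2 /\
  (exists i, applicable r1 (rot i w)) /\ (exists j, applicable r2 (rot j w)).

Definition ctilde_defined (w : seq Sigma) (r1 r2 : rule) : Prop :=
  exists i, applicable r1 (rot i w) && applicable r2 (rot i w).

Definition pre (u : seq Sigma) : pred (seq Sigma) := fun p => (p != [::]) && prefix p u.
Definition suf (u : seq Sigma) : pred (seq Sigma) := fun p => (p != [::]) && suffix p u.

Definition disjoint_pred (A B : pred (seq Sigma)) : Prop := forall p, ~ (A p && B p).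

End Rewriting.

(* Main.v *)
Require Import Defs.
From mathcomp Require Import all_boot.

Section Aux.
Variable T : eqType.

Lemma overlap (a b c d : seq T) : a ++ b = c ++ d ->
  exists m, (a = c ++ m /\ d = m ++ b) \/ (c = a ++ m /\ b = m ++ d).
Proof.
elim: a c => [|x a IH] [|y c] /=.
- by move=> ->; exists [::]; right.
- by move=> ->; exists (y :: c); right.
- by move=> <-; exists (x :: a); left.
- case=> -> /IH [m [[-> ->]|[-> ->]]]; exists m; [left|right]; done.
Qed.

Lemma rot_rotw (w v : seq T) k j : v = rot k w -> exists t, rot j w = rot t v.
Proof.
move=> ->.
rewrite -{1}(rotK k w) /rotr rot_rot_add.
by eexists.
Qed.

Lemma main (w l1 l2 : seq T) :
  (forall p, p != [::] -> prefix p l2 -> suffix p l1 -> False) ->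
  (exists i, infix l1 (rot i w)) -> (exists j, infix l2 (rot j w)) ->
  exists i, infix l1 (rot i w) && infix l2 (rot i w).
Proof.
move=> H [i /infixP [a [b Hi]]] [j Hj].
set v := rot (size (a ++ l1)) (rot i w).
have Hv : v = b ++ a ++ l1 by rewrite /v Hi catA rot_size_cat catA.
have [k Hk] : exists k, v = rot k w by rewrite /v rot_rot_add; eexists.
have [t Ht] := @rot_rotw w v k j Hk.
have Hl1v : infix l1 v by rewrite Hv catA suffix_infix.
suff [Hl2v|Hl12] : infix l2 v \/ infix l1 l2.
- by exists k; rewrite -Hk Hl1v Hl2v.
- by exists j; rewrite Hj (infix_trans Hl12 Hj).
move: Hj; rewrite Ht rot_minn.
set t' := minn t (size v).
set x := take t' v; set y := drop t' v.
have Hxy : v = x ++ y by rewrite cat_take_drop.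
rewrite /rot -/x -/y => /infixP [c [d E]].
have [m [[Ey Em]|[Ec Ex]]] := overlap _ _ _ _ E.
- have [m' [[Em' Ed]|[El Ex]]] := overlap _ _ _ _ (esym Em).
  + left; rewrite Hxy; apply: infix_catl.
    by rewrite Ey Em' catA; apply: infix_catr; apply: suffix_infix.
  +
    case: m El Ey Em => [|z m] El Ey Em.
      by left; rewrite Hxy El Ex /= -catA prefix_infix.
    case: m' El Ex => [|z' m'] El Ex.
      by left; rewrite Hxy Ey El cats0 catA suffix_infix.
    have E2 : (x ++ c) ++ z :: m = (b ++ a) ++ l1 by rewrite -catA -Ey -Hxy Hv catA.
    have [n [[Eu Es]|[Eu Es]]] := overlap _ _ _ _ E2.
    * exfalso; apply: (H (z :: m)) => //.
        by rewrite El prefix_prefix.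
      by rewrite Es suffix_suffix.
    * right; rewrite El Es -catA; exact: (infix_infix n l1).
- left; rewrite Hxy; apply: infix_catr.
  by rewrite Ex; apply: infix_catl; apply: prefix_infix.
Qed.
End Aux.

Theorem lemma5p2 (Sigma : finType) (R : rewriting_system Sigma)
  (w : seq Sigma) (r1 r2 : rule Sigma) :
  complete R -> is_triple R w r1 r2 ->
  disjoint_pred (pre r2.1) (suf r1.1) \/ disjoint_pred (pre r1.1) (suf r2.1) ->
  ctilde_defined w r1 r2.
Proof.
move=> _ [_ [_ [E1 E2]]] [D|D]; rewrite /ctilde_defined /applicable.
- apply: main => // p Hp H1 H2; apply: (D p); rewrite /pre /suf Hp H1 H2.
  done.
- have [i Hi] : exists i, infix r2.1 (rot i w) && infix r1.1 (rot i w).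
    apply: main => // p Hp H1 H2; apply: (D p); rewrite /pre /suf Hp H1 H2.
    done.
  by exists i; rewrite andbC.
Qed.
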